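(* Let $u$ be a coherent utility on $L^0$ with determining set $\mathcal{D}$, and let $Y$ be a random variable or random vector. Then for every $X\in L^1_s(\mathcal{D})\cap L^1_s(\mathsf{E}(\mathcal{D}\mid Y))\cap L^1$ we have $$u^f(X;Y)=u(\mathsf{E}(X\mid Y)).$$
   Context: Let $(\Omega,\mathcal{F},\mathsf{P})$ be a probability space, $L^0$ the space of all real random variables, $L^1=L^1(\mathsf{P})$, and $\mathcal{P}$ the set of probability measures on $\mathcal{F}$ absolutely continuous with respect to $\mathsf{P}$; measures $\mathsf{Q}\in\mathcal{P}$ are identified with their densities $Z=d\mathsf{Q}/d\mathsf{P}$. For $\mathsf{Q}\in\mathcal{P}$ and $X\in L^0$, $\mathsf{E}_\mathsf{Q}X:=\mathsf{E}_\mathsf{Q}X^+-\mathsf{E}_\mathsf{Q}X^-$ with the convention $\infty-\infty=-\infty$; $\mathsf{E}$ denotes expectation under $\mathsf{P}$. A coherent utility on $L^0$ is a map $u:L^0\to[-\infty,\infty]$ of the form $u(X)=\inf_{\mathsf{Q}\in\mathcal{D}}\mathsf{E}_\mathsf{Q}X$ for a nonempty $\mathcal{D}\subseteq\mathcal{P}$; its determining set is the largest such set, namely $\{\mathsf{Q}\in\mathcal{P}:\mathsf{E}_\mathsf{Q}X\ge u(X)\ \forall X\in L^0\}$. For a set $\mathcal{C}\subseteq\mathcal{P}$, $L^1_s(\mathcal{C})=\{X\in L^0:\lim_{n\to\infty}\sup_{\mathsf{Q}\in\mathcal{C}}\mathsf{E}_\mathsf{Q}|X|I(|X|>n)=0\}$.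 For a random vector $Y$, $\mathsf{E}(\mathcal{D}\mid Y):=\{\mathsf{E}(Z\mid Y):Z\in\mathcal{D}\}$ (again a subset of $\mathcal{P}$ via densities), and the factor utility is $u^f(X;Y):=\inf_{\mathsf{Q}\in\mathsf{E}(\mathcal{D}\mid Y)}\mathsf{E}_\mathsf{Q}X$. *)

(* Defs.v *)
From HB Require Import structures.
From mathcomp Require Import all_boot all_order all_algebra.
From mathcomp Require Import all_classical all_reals all_analysis.
Set Implicit Arguments. Unset Strict Implicit. Unset Printing Implicit Defensive.
Import Order.TTheory GRing.Theory Num.Theory.
Local Open Scope classical_set_scope.
Local Open Scope ring_scope.

Section Defs.
Context (d : measure_display) (T : measurableType d) (R : realType)
  (P : probability T R).

(* A measure Q << P identified with its density Z = dQ/dP. *)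
Definition is_density (Z : T -> R) : Prop :=
  [/\ measurable_fun setT Z, (forall x, 0 <= Z x) &
      (\int[P]_x (Z x)%:E = 1)%E].

(* E_Q X := E_Q X^+ - E_Q X^-, with the convention oo - oo = -oo. *)
Definition EQ (Z X : T -> R) : \bar R :=
  let a := (\int[P]_x (Z x * Num.max (X x) 0)%:E)%E in
  let b := (\int[P]_x (Z x * Num.max (- X x) 0)%:E)%E in
  if b == +oo%E then (-oo)%E else (a - b)%E.

Definition coherent_utility (u : (T -> R) -> \bar R) : Prop :=
  exists D0 : set (T -> R),
    [/\ D0 !=set0, (forall Z, D0 Z -> is_density Z) &
        forall X, measurable_fun setT X ->
          u X = ereal_inf [set EQ Z X | Z in D0]].

(* determining set: the largest such set *)
Definition determining_set (u : (T -> R) -> \bar R) : set (T -> R) :=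
  [set Z | is_density Z /\
     forall X, measurable_fun setT X -> (u X <= EQ Z X)%E].

Definition L1s (C : set (T -> R)) (X : T -> R) : Prop :=
  (fun n : nat => ereal_sup
     [set (\int[P]_x (Z x * (`|X x| * (if `|X x| > n%:R then 1 else 0)))%:E)%E
       | Z in C]) @ \oo --> 0%E.

Definition sigmaY (n : nat) (Y : 'I_n -> T -> R) : set (set T) :=
  <<s [set A | exists i B, measurable B /\ A = Y i @^-1` B] >>.

Definition cond_exp (n : nat) (Y : 'I_n -> T -> R) (V W : T -> R) : Prop :=
  [/\ P.-integrable setT (EFin \o V),
      P.-integrable setT (EFin \o W),
      (forall B : set R, measurable B -> sigmaY Y (W @^-1` B)) &
      forall A, sigmaY Y A ->
        (\int[P]_(x in A) (W x)%:E = \int[P]_(x in A) (V x)%:E)%E].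

Definition cond_set (n : nat) (Y : 'I_n -> T -> R) (D : set (T -> R))
  : set (T -> R) :=
  [set W | is_density W /\ exists2 Z, D Z & cond_exp Y Z W].

Definition factor_utility (u : (T -> R) -> \bar R) (n : nat)
  (Y : 'I_n -> T -> R) (X : T -> R) : \bar R :=
  ereal_inf [set EQ W X | W in cond_set Y (determining_set u)].

End Defs.

(* Main.v *)
Require Import Defs.
From HB Require Import structures.
From mathcomp Require Import all_boot all_order all_algebra.
From mathcomp Require Import all_classical all_reals all_analysis.
From mathcomp Require Import measurable_realfun.
From mathcomp Require Import lra.
Set Implicit Arguments. Unset Strict Implicit. Unset Printing Implicit Defensive.
Import Order.TTheory GRing.Theory Num.Theory.
Import numFieldNormedType.Exports.
Local Open Scope classical_set_scope.
Local Open Scope ring_scope.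

Section tower.
Context d (T : measurableType d) (R : realType) (mu : {measure set T -> \bar R}).
Variable G : set (set T).
Hypothesis hG : forall A, <<s G >> A -> measurable A.
Local Notation T' := (g_sigma_algebraType G).

Lemma mfun_sub (g : T' -> R) : measurable_fun setT g -> measurable_fun setT (g : T -> R).
Proof. by move=> mg _ B mB; apply: hG; exact: mg. Qed.

Import HBNNSimple.
Local Open Scope ereal_scope.

Lemma int_indic (V : T -> R) (A : set T) :
  \int[mu]_x (V x * \1_A x)%:E = \int[mu]_(x in A) (V x)%:E.
Proof.
rewrite [RHS]integral_mkcond epatch_indic; apply: eq_integral => x _.
by rewrite /= EFinM.
Qed.

Lemma int_simple (V : T -> R) (s : {nnsfun T' >-> R}) :
  measurable_fun setT V -> (forall x, (0 <= V x)%R) ->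
  \int[mu]_x (V x * s x)%:E =
  \sum_(y \in range s) (y%:E * \int[mu]_(x in (s : T -> R) @^-1` [set y]) (V x)%:E).
Proof.
move=> mV V0.
have fr : finite_set (range s) by exact: fimfunP.
have mpre y : measurable ((s : T -> R) @^-1` [set y]).
  by apply: hG; exact: (measurable_funPTI s (measurable_set1 y)).
under eq_integral => x _.
  rewrite (fimfunE s x) mulr_fsumr -fsumEFin //.
  over.
rewrite ge0_integral_fsum //; last first.
- move=> y x _; rewrite lee_fin indicE.
  case: (boolP (x \in _)) => [/set_mem /= <-|_]; last by rewrite !mulr0.
  by rewrite mulr1 mulr_ge0 // fun_ge0.
- move=> y; apply/measurable_EFinP; apply: measurable_funM => //.
  apply: measurable_funM => //; exact: measurable_indic.
apply: eq_fsbigr => y /set_mem [x0 _ <-].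
under eq_integral do rewrite mulrCA EFinM.
rewrite ge0_integralZl_EFin //.
all: first [ by rewrite int_indic | by move=> x _; rewrite lee_fin mulr_ge0
  | (apply/measurable_EFinP; apply: measurable_funM => //; exact: measurable_indic)
  | exact: fun_ge0 ].
Qed.

Lemma tower (V V' : T -> R) (g : T' -> R) :
  measurable_fun setT V -> measurable_fun setT V' ->
  (forall x, (0 <= V x)%R) -> (forall x, (0 <= V' x)%R) ->
  (forall A, <<s G >> A -> \int[mu]_(x in A) (V x)%:E = \int[mu]_(x in A) (V' x)%:E) ->
  (forall x, (0 <= g x)%R) -> measurable_fun setT g ->
  \int[mu]_x (V x * g x)%:E = \int[mu]_x (V' x * g x)%:E.
Proof.
move=> mV mV' V0 V'0 hA g0 mg.
have mEg := (measurable_EFinP _ _).2 mg.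
pose h := nnsfun_approx (@measurableT _ T') mEg.
have mh n : measurable_fun (setT : set T) (h n : T -> R).
  by apply: mfun_sub; exact: measurable_funP.
suff key (U : T -> R) : measurable_fun setT U -> (forall x, (0 <= U x)%R) ->
  \int[mu]_x (U x * g x)%:E = limn (fun n => \int[mu]_x (U x * h n x)%:E).
  rewrite key // [RHS]key //; congr (lim (_ @ \oo)); apply/funext => n.
  rewrite !int_simple //; apply: eq_fsbigr => y _; rewrite hA //.
  exact: (measurable_funPTI (h n) (measurable_set1 y)).
move=> mU U0.
have gE x : (U x * g x)%:E = limn (fun n => (U x * h n x)%:E).
  have fU : (U x)%:E \is a fin_num by [].
  apply/esym/cvg_lim => //; rewrite EFinM.
  under eq_fun do rewrite EFinM.
  exact: cvgeZl fU (cvg_nnsfun_approx (@measurableT _ T') mEg (fun x _ => g0 x : (0 <= (EFin \o g) x)) (I : setT x)).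
under eq_integral do rewrite gE.
apply: monotone_convergence => //.
- move=> n; apply/measurable_EFinP; apply: measurable_funM => //.
- by move=> n x _; rewrite lee_fin mulr_ge0.
- move=> x _ a b ab; rewrite lee_fin ler_wpM2l //.
  by have /lefP := nd_nnsfun_approx (@measurableT _ T') mEg ab; apply.
Qed.
End tower.
Section exist.
Context d (T : measurableType d) (R : realType) (mu : probability T R).
Variable G : set (set T).
Hypothesis hG : forall A, <<s G >> A -> measurable A.
Local Notation T' := (g_sigma_algebraType G).
Variable V : T -> R.
Hypothesis mV : measurable_fun setT V.
Hypothesis V0 : forall x, (0 <= V x)%R.
Hypothesis iV : mu.-integrable setT (EFin \o V).
Local Open Scope ereal_scope.

Definition nuV : set T' -> \bar R := fun A => \int[mu]_(x in A) (V x)%:E.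
Definition muT : set T' -> \bar R := fun A => mu A.

Let nuV0 : nuV set0 = 0. Proof. exact: integral_set0. Qed.
Let nuV_ge0 A : 0 <= nuV A.
Proof. by apply: integral_ge0 => x _; rewrite lee_fin. Qed.
Let nuV_sa : semi_sigma_additive nuV.
Proof.
move=> F mF tF mUF.
apply: (@semi_sigma_additive_nng_induced _ _ _ mu (EFin \o V)) => //.
all: first [ exact/measurable_EFinP | by move=> x; rewrite /= lee_fin
  | by move=> n; apply: hG; exact: mF | exact: hG ].
Qed.
HB.instance Definition _ := isMeasure.Build _ T' R nuV nuV0 nuV_ge0 nuV_sa.

Let muT0 : muT set0 = 0. Proof. exact: measure0. Qed.
Let muT_ge0 A : 0 <= muT A. Proof. exact: measure_ge0. Qed.
Let muT_sa : semi_sigma_additive muT.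
Proof.
move=> F mF tF mUF; apply: measure_semi_sigma_additive => //.
- by move=> n; apply: hG; exact: mF.
- exact: hG.
Qed.
HB.instance Definition _ := isMeasure.Build _ T' R muT muT0 muT_ge0 muT_sa.

Let nuV_fin : fin_num_fun nuV.
Proof.
move=> A mA; rewrite ge0_fin_numE //.
apply: le_lt_trans (integrableP _ _ _ iV).2.
apply: (@le_trans _ _ (\int[mu]_x (V x)%:E)).
  apply: ge0_subset_integral => //; first exact: hG.
  - exact/measurable_EFinP.
  - by move=> x _; rewrite lee_fin.
rewrite le_eqVlt; apply/orP; left; apply/eqP; apply: eq_integral => x _.
by rewrite /= ger0_norm.
Qed.
HB.instance Definition _ := Measure_isFinite.Build _ T' R nuV nuV_fin.

Let muT_fin : fin_num_fun muT.
Proof. by move=> A mA; rewrite /muT fin_num_measure //; exact: hG. Qed.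
HB.instance Definition _ := Measure_isFinite.Build _ T' R muT muT_fin.

Lemma nuV_dom : nuV `<< muT.
Proof.
apply/null_content_dominatesP => A mA muA.
rewrite /nuV null_set_integral //; first exact: hG.
by apply/measurable_EFinP; exact: measurable_funS mV.
Qed.

Lemma exist_ce : exists V' : T' -> R,
  [/\ (forall x, 0 <= V' x)%R, measurable_fun setT V' &
    forall A, <<s G >> A ->
      \int[mu]_(x in A) (V' x)%:E = \int[mu]_(x in A) (V x)%:E].
Proof.
have [f [f0 ffin fint fE]] := radon_nikodym_sigma_finite nuV_dom.
have mf : measurable_fun setT f := measurable_int _ fint.
have ff : EFin \o (fun x => fine (f x)) = f by apply/funext => x; rewrite /= fineK.
exists (fun x => fine (f x)); split.
- by move=> x; exact: fine_ge0 (f0 x).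
- by apply/measurable_EFinP; rewrite ff.
move=> A mA; rewrite -[RHS]/(nuV A) fE //.
pose phi := (fun x : T => x : T').
have mphi : measurable_fun setT phi.
  by move=> _ B mB; rewrite setTI; exact: hG.
symmetry; transitivity (\int[pushforward mu phi]_(y in A) f y); first by [].
rewrite ge0_integral_pushforward //.
all: try by [apply: eq_integral => x _; rewrite /= fineK | exact: measurable_funS mf | move=> x _; exact: f0].
Qed.

End exist.

Section key.
Context d (T : measurableType d) (R : realType) (mu : probability T R).
Variable G : set (set T).
Hypothesis hG : forall A, <<s G >> A -> measurable A.
Local Notation T' := (g_sigma_algebraType G).

Definition pp (r : R) := Num.max r 0.
Definition nn (r : R) := Num.max (- r) 0.
Lemma pp_ge0 r : (0 <= pp r)%R. Proof. by rewrite /pp le_max lexx orbT. Qed.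
Lemma nn_ge0 r : (0 <= nn r)%R. Proof. by rewrite /nn le_max lexx orbT. Qed.
Lemma ppnn r : r = (pp r - nn r)%R.
Proof.
rewrite /pp /nn; case: (leP 0 r) => r0.
- by rewrite (max_idPr _) ?subr0 // oppr_le0.
- by rewrite (max_idPl _) ?sub0r ?opprK // oppr_ge0 ltW.
Qed.
Lemma ppnn_abs r : `|r| = (pp r + nn r)%R.
Proof.
rewrite /pp /nn; case: (leP 0 r) => r0.
- by rewrite (max_idPr _) ?addr0 ?ger0_norm // oppr_le0.
- by rewrite (max_idPl _) ?add0r ?ltr0_norm // oppr_ge0 ltW.
Qed.
Lemma mpp (f : T -> R) (D : set T) : measurable_fun D f -> measurable_fun D (fun x => pp (f x)).
Proof. by move=> mf; apply: measurable_maxr => //. Qed.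
Lemma mnn (f : T -> R) (D : set T) : measurable_fun D f -> measurable_fun D (fun x => nn (f x)).
Proof. by move=> mf; apply: measurable_maxr => //; exact: measurableT_comp. Qed.

Local Open Scope ereal_scope.

Lemma ere4 (a b c e : \bar R) : a \is a fin_num -> b \is a fin_num ->
  c \is a fin_num -> e \is a fin_num -> a - b = c - e -> a + e = c + b.
Proof.
move=> fa fb fc fe; rewrite -(fineK fa) -(fineK fb) -(fineK fc) -(fineK fe).
rewrite -!EFinB -!EFinD => h; have h2 := EFin_inj h; congr EFin; lra.
Qed.

Lemma int_pp (f : T -> R) (D : set T) : measurable D -> measurable_fun D f ->
  mu.-integrable D (EFin \o f) -> mu.-integrable D (EFin \o (fun x => pp (f x))).
Proof.
move=> mD mf; apply: le_integrable => //; first exact/measurable_EFinP/mpp.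
move=> x _; rewrite /= ?abse_EFin lee_fin (ppnn_abs (f x)) ger0_norm ?pp_ge0 //.
by rewrite lerDl nn_ge0.
Qed.

Lemma int_nn (f : T -> R) (D : set T) : measurable D -> measurable_fun D f ->
  mu.-integrable D (EFin \o f) -> mu.-integrable D (EFin \o (fun x => nn (f x))).
Proof.
move=> mD mf; apply: le_integrable => //; first exact/measurable_EFinP/mnn.
move=> x _; rewrite /= ?abse_EFin lee_fin (ppnn_abs (f x)) ger0_norm ?nn_ge0 //.
by rewrite lerDr pp_ge0.
Qed.

Lemma int_split (f : T -> R) (A : set T) : measurable A -> measurable_fun setT f ->
  mu.-integrable setT (EFin \o f) ->
  \int[mu]_(x in A) (f x)%:E =
  \int[mu]_(x in A) (pp (f x))%:E - \int[mu]_(x in A) (nn (f x))%:E.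
Proof.
move=> mA mf iF.
have iA : mu.-integrable A (EFin \o f) by exact: integrableS iF.
have mfA : measurable_fun A f by exact: measurable_funS mf.
rewrite -integralB_EFin //; last 2 first.
- exact: int_pp.
- exact: int_nn.
by apply: eq_integral => x _; rewrite -EFinB -ppnn.
Qed.

Lemma stower (X W : T -> R) (g : T' -> R) :
  measurable_fun setT X -> mu.-integrable setT (EFin \o X) ->
  measurable_fun setT (W : T' -> R) -> mu.-integrable setT (EFin \o W) ->
  (forall A, <<s G >> A -> \int[mu]_(x in A) (W x)%:E = \int[mu]_(x in A) (X x)%:E) ->
  (forall x, 0 <= g x)%R -> measurable_fun setT g ->
  \int[mu]_x (pp (W x) * g x)%:E + \int[mu]_x (nn (X x) * g x)%:E =
  \int[mu]_x (pp (X x) * g x)%:E + \int[mu]_x (nn (W x) * g x)%:E.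
Proof.
move=> mX iX mW iW ce g0 mg.
have mWT : measurable_fun setT (W : T -> R) := mfun_sub hG mW.
have mgT : measurable_fun setT (g : T -> R) := mfun_sub hG mg.
have mU (f : T -> R) : measurable_fun setT f -> measurable_fun setT (fun x => (f x * g x)%R).
  by move=> mf; apply: measurable_funM.
have ge0U (f : T -> R) : (forall x, 0 <= f x)%R -> forall x, (0 <= f x * g x)%R.
  by move=> f0 x; rewrite mulr_ge0.
have hsum : forall (a b : T -> R), measurable_fun setT a -> measurable_fun setT b ->
    (forall x, 0 <= a x)%R -> (forall x, 0 <= b x)%R ->
    \int[mu]_x (a x * g x)%:E + \int[mu]_x (b x * g x)%:E =
    \int[mu]_x ((a x + b x) * g x)%:E.
  move=> a b ma mb a0 b0; rewrite -ge0_integralD //.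
  - by apply: eq_integral => x _; rewrite mulrDl EFinD.
  - by move=> x _; rewrite lee_fin mulr_ge0.
  - exact/measurable_EFinP/mU.
  - by move=> x _; rewrite lee_fin mulr_ge0.
  - exact/measurable_EFinP/mU.
rewrite !hsum; try by [exact: mpp | exact: mnn | move=> x; exact: pp_ge0 | move=> x; exact: nn_ge0].
have fin (f : T -> R) (A : set T) : measurable A -> measurable_fun setT f ->
    mu.-integrable setT (EFin \o f) ->
    (\int[mu]_(x in A) (pp (f x))%:E) \is a fin_num /\
    (\int[mu]_(x in A) (nn (f x))%:E) \is a fin_num.
  move=> mA mf iF; have iA : mu.-integrable A (EFin \o f) by exact: integrableS iF.
  have mfA : measurable_fun A f by exact: measurable_funS mf.
  by split; apply: integrable_fin_num => //; [exact: int_pp | exact: int_nn].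
apply: (tower hG) => //.
- by apply: measurable_funD; [exact: mpp | exact: mnn].
- by apply: measurable_funD; [exact: mpp | exact: mnn].
- by move=> x; rewrite addr_ge0 ?pp_ge0 ?nn_ge0.
- by move=> x; rewrite addr_ge0 ?pp_ge0 ?nn_ge0.
move=> A sA; have mA := hG sA.
under eq_integral do rewrite EFinD.
under [RHS]eq_integral do rewrite EFinD.
have := ce A sA; rewrite (int_split mA mWT iW) (int_split mA mX iX).
have [f1 f2] := fin W A mA mWT iW; have [f3 f4] := fin X A mA mX iX.
move=> /(ere4 f1 f2 f3 f4) h.
rewrite ge0_integralD //; first rewrite ge0_integralD //.
all: try by [move=> x _; rewrite lee_fin ?pp_ge0 ?nn_ge0 | exact/measurable_EFinP/measurable_funS/mpp | exact/measurable_EFinP/measurable_funS/mnn].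
all: apply/measurable_EFinP; first [apply: mnn | apply: mpp].
all: apply: (measurable_funS measurableT (@subsetT _ A)); assumption.
Qed.

Lemma ere4' (a b c e : \bar R) : a \is a fin_num -> b \is a fin_num ->
  c \is a fin_num -> e \is a fin_num -> a + e = c + b -> a - b = c - e.
Proof.
move=> fa fb fc fe; rewrite -(fineK fa) -(fineK fb) -(fineK fc) -(fineK fe).
rewrite -!EFinB -!EFinD => h; have h2 := EFin_inj h; congr EFin; lra.
Qed.

Lemma pp0 r : (r <= 0)%R -> pp r = 0%R.
Proof. by move=> r0; rewrite /pp (max_idPr _). Qed.
Lemma nn0 r : (0 <= r)%R -> nn r = 0%R.
Proof. by move=> r0; rewrite /nn (max_idPr _) // oppr_le0. Qed.

Lemma KL (X W Z W' : T -> R) :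
  measurable_fun setT X -> mu.-integrable setT (EFin \o X) ->
  measurable_fun setT (W : T' -> R) -> mu.-integrable setT (EFin \o W) ->
  (forall A, <<s G >> A -> \int[mu]_(x in A) (W x)%:E = \int[mu]_(x in A) (X x)%:E) ->
  measurable_fun setT Z -> (forall x, 0 <= Z x)%R ->
  measurable_fun setT (W' : T' -> R) -> (forall x, 0 <= W' x)%R ->
  (forall A, <<s G >> A -> \int[mu]_(x in A) (W' x)%:E = \int[mu]_(x in A) (Z x)%:E) ->
  \int[mu]_x (W' x * `|X x|)%:E < +oo ->
  EQ mu W' X = EQ mu Z W.
Proof.
move=> mX iX mW iW ceX mZ Z0 mW' W'0 ceZ finX.
have mWT : measurable_fun setT (W : T -> R) := mfun_sub hG mW.
have mW'T : measurable_fun setT (W' : T -> R) := mfun_sub hG mW'.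
have mppW : measurable_fun setT (fun x : T' => pp (W x)) by apply: measurable_maxr.
have mnnW : measurable_fun setT (fun x : T' => nn (W x)).
  by apply: measurable_maxr => //; exact: measurableT_comp.
have s1 (h : T' -> R) : measurable_fun setT h -> (forall x, 0 <= h x)%R ->
    \int[mu]_x (Z x * h x)%:E = \int[mu]_x (W' x * h x)%:E.
  move=> mh h0; apply: (tower hG) => //.
  by move=> A sA; rewrite ceZ.
have leX (f : T -> R) : measurable_fun setT f ->
    (forall x, 0 <= f x <= W' x * `|X x|)%R -> \int[mu]_x (f x)%:E < +oo.
  move=> mf hf; apply: le_lt_trans finX; apply: ge0_le_integral => //.
  all: try first [ by move=> x _; have /andP[h1 h2] := hf x; rewrite lee_fin
    | exact/measurable_EFinP
    | by move=> x _; rewrite lee_fin mulr_ge0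
    | apply/measurable_EFinP; apply: measurable_funM => //; exact: measurableT_comp ].
  idtac.
have ppX_le x : (pp (X x) <= `|X x|)%R by rewrite ppnn_abs lerDl nn_ge0.
have nnX_le x : (nn (X x) <= `|X x|)%R by rewrite ppnn_abs lerDr pp_ge0.
have finxp : \int[mu]_x (W' x * pp (X x))%:E < +oo.
  apply: leX; first by apply: measurable_funM => //; exact: mpp.
  by move=> x; rewrite mulr_ge0 ?pp_ge0 //= ler_wpM2l.
have finxm : \int[mu]_x (W' x * nn (X x))%:E < +oo.
  apply: leX; first by apply: measurable_funM => //; exact: mnn.
  by move=> x; rewrite mulr_ge0 ?nn_ge0 //= ler_wpM2l.
pose B := (W : T' -> R) @^-1` `]0%R, +oo[.
have mB : @measurable _ T' B.
  by rewrite -[B]setTI; apply: mW => //; exact: measurable_itv.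
have inB x : (x \in B) = (0 < W x)%R.
  by apply/idP/idP; rewrite in_setE /B /= in_itv /= andbT.
have ind01 (A : set T') x : (\1_A x = 0 :> R \/ \1_A x = 1 :> R)%R.
  by case: (boolP (x \in A)) => h; [right | left]; rewrite indicE; [rewrite h | rewrite (negbTE h)].
have leg (A : set T') (f : T -> R) x : (forall x, f x <= `|X x|)%R -> (0 <= f x)%R ->
    (0 <= f x * (W' x * \1_A x) <= W' x * `|X x|)%R.
  move=> hf f0; have [->|->] := ind01 A x.
  - by rewrite !mulr0 lexx mulr_ge0.
  - by rewrite mulr1 mulr_ge0 //= mulrC ler_wpM2l.
have fp : \int[mu]_x (W' x * pp (W x))%:E < +oo.
  pose g1 := fun x : T' => (W' x * \1_B x)%R.
  have mg1 : measurable_fun setT g1 by apply: measurable_funM => //; exact: measurable_indic.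
  have g10 x : (0 <= g1 x)%R by rewrite mulr_ge0 // indicE ler0n.
  have := stower mX iX mW iW ceX g10 mg1.
  have -> : \int[mu]_x (pp (W x) * g1 x)%:E = \int[mu]_x (W' x * pp (W x))%:E.
    apply: eq_integral => x _; rewrite /g1 indicE inB.
    case: (ltP 0%R (W x)) => h /=; first by rewrite mulr1 mulrC.
    by rewrite pp0 // !(mulr0, mul0r).
  have -> : \int[mu]_x (nn (W x) * g1 x)%:E = 0.
    apply: integral0_eq => x _; rewrite /g1 indicE inB.
    case: (ltP 0%R (W x)) => h /=; first by rewrite nn0 ?mul0r // ltW.
    by rewrite !mulr0.
  rewrite adde0 => h.
  have q0 : 0 <= \int[mu]_x (nn (X x) * g1 x)%:E.
    by apply: integral_ge0 => x _; rewrite lee_fin mulr_ge0 ?nn_ge0.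
  apply: le_lt_trans (leeDl _ q0) _; rewrite h.
  apply: leX; first by apply: measurable_funM; [exact: mpp | exact: (mfun_sub hG mg1)].
  by move=> x; apply: (leg B (fun x => pp (X x))) => //; exact: pp_ge0.
have fm : \int[mu]_x (W' x * nn (W x))%:E < +oo.
  pose g2 := fun x : T' => (W' x * \1_(~` B) x)%R.
  have mg2 : measurable_fun setT g2.
    by apply: measurable_funM => //; apply: measurable_indic; exact: measurableC.
  have g20 x : (0 <= g2 x)%R by rewrite mulr_ge0 // indicE ler0n.
  have := stower mX iX mW iW ceX g20 mg2.
  have -> : \int[mu]_x (nn (W x) * g2 x)%:E = \int[mu]_x (W' x * nn (W x))%:E.
    apply: eq_integral => x _; rewrite /g2 indicE in_setC inB.
    case: (ltP 0%R (W x)) => h /=; last by rewrite mulr1 mulrC.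
    by rewrite nn0 ?ltW // !(mulr0, mul0r).
  have -> : \int[mu]_x (pp (W x) * g2 x)%:E = 0.
    apply: integral0_eq => x _; rewrite /g2 indicE in_setC inB.
    case: (ltP 0%R (W x)) => h /=; last by rewrite pp0 ?mul0r.
    by rewrite !mulr0.
  rewrite add0e => h.
  have q0 : 0 <= \int[mu]_x (pp (X x) * g2 x)%:E.
    by apply: integral_ge0 => x _; rewrite lee_fin mulr_ge0 ?pp_ge0.
  apply: le_lt_trans (leeDr _ q0) _; rewrite -h.
  apply: leX; first by apply: measurable_funM; [exact: mnn | exact: (mfun_sub hG mg2)].
  by move=> x; apply: (leg (~` B) (fun x => nn (X x))) => //; exact: nn_ge0.
have cm (f : T -> R) : \int[mu]_x (f x * W' x)%:E = \int[mu]_x (W' x * f x)%:E.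
  by apply: eq_integral => x _; rewrite mulrC.
have H := stower mX iX mW iW ceX W'0 mW'.
rewrite (cm (fun x => pp (W x))) (cm (fun x => nn (X x))) in H.
rewrite (cm (fun x => pp (X x))) (cm (fun x => nn (W x))) in H.
have fin (f : T -> R) : (forall x, 0 <= f x)%R ->
    \int[mu]_x (W' x * f x)%:E < +oo -> \int[mu]_x (W' x * f x)%:E \is a fin_num.
  move=> f0 h; rewrite ge0_fin_numE //.
  by apply: integral_ge0 => x _; rewrite lee_fin mulr_ge0.
rewrite /EQ /=.
rewrite (lt_eqF finxm) (s1 (fun x => pp (W x))) // ?(s1 (fun x => nn (W x))) // ?(lt_eqF fm);
  last 2 first.
- by move=> x; exact: nn_ge0.
- by move=> x; exact: pp_ge0.
symmetry; apply: ere4'; last exact: H.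
- by apply: fin => // x; exact: pp_ge0.
- by apply: fin => // x; exact: nn_ge0.
- by apply: fin => // x; exact: pp_ge0.
- by apply: fin => // x; exact: nn_ge0.
Qed.

Lemma L1s_fin (C : set (T -> R)) (X Z : T -> R) : L1s mu C X -> C Z ->
  measurable_fun setT Z -> (forall x, 0 <= Z x)%R -> \int[mu]_x (Z x)%:E = 1 ->
  measurable_fun setT X -> \int[mu]_x (Z x * `|X x|)%:E < +oo.
Proof.
move=> hL CZ mZ Z0 Z1 mX.
move/fine_cvgP: hL => [hfin _].
case: hfin => N _ hN; have fN := hN N (leqnn N).
pose ind := fun x => if (N%:R < `|X x|)%R then 1%R else 0%R : R.
have mind : measurable_fun setT ind.
  apply: measurable_fun_ifT.
  - apply: measurable_fun_ltr => //; exact: measurableT_comp.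
  - exact: measurable_cst.
  - exact: measurable_cst.
have mA : measurable_fun setT (fun x => `|X x|)%R by exact: measurableT_comp.
have ind0 x : (0 <= ind x)%R by rewrite /ind; case: ifP.
have le1 : \int[mu]_x (Z x * (`|X x| * ind x))%:E <= ereal_sup
      [set \int[mu]_x (Z x * (`|X x| * (if N%:R < `|X x| then 1 else 0)))%:E
         | Z in C].
  by apply: ereal_sup_ubound; exists Z.
have fin1 : \int[mu]_x (Z x * (`|X x| * ind x))%:E < +oo.
  by apply: le_lt_trans le1 _; rewrite ltey_eq; apply/orP; left.
apply: (@le_lt_trans _ _ (\int[mu]_x ((N%:R * Z x)%:E + (Z x * (`|X x| * ind x))%:E))).
  apply: ge0_le_integral => //.
  - by move=> x _; rewrite lee_fin mulr_ge0.
  - apply/measurable_EFinP; exact: measurable_funM.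
  - apply: emeasurable_funD; apply/measurable_EFinP.
      exact: measurable_funM.
    by apply: measurable_funM => //; exact: measurable_funM.
  move=> x _; rewrite -EFinD lee_fin /ind; case: ifPn => h.
  - by rewrite mulr1 lerDr mulr_ge0.
  - rewrite mulr0 mulr0 addr0 mulrC ler_wpM2r //.
    by rewrite leNgt.
rewrite ge0_integralD //.
- under eq_integral do rewrite EFinM.
  rewrite ge0_integralZl_EFin //.
  all: try by [move=> x _; rewrite lee_fin | exact/measurable_EFinP].
  by rewrite Z1 mule1 lte_add_pinfty // ltry.
all: try by [move=> x _; rewrite lee_fin ?mulr_ge0
  | apply/measurable_EFinP; exact: measurable_funM
  | apply/measurable_EFinP; apply: measurable_funM => //; exact: measurable_funM].
Qed.

End key.

Unset Implicit Arguments. Set Strict Implicit. Set Printing Implicit Defensive.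

Theorem theorem3p3 (d : measure_display) (T : measurableType d) (R : realType)
  (P : probability T R) (u : (T -> R) -> \bar R) (n : nat)
  (Y : 'I_n -> T -> R) :
  coherent_utility P u ->
  (forall i, measurable_fun setT (Y i)) ->
  forall X : T -> R, measurable_fun setT X ->
  L1s P (determining_set P u) X ->
  L1s P (cond_set P Y (determining_set P u)) X ->
  P.-integrable setT (EFin \o X) ->
  forall W : T -> R, cond_exp P Y X W ->
  factor_utility P u Y X = u W.
Proof.
move=> [D0 [D0n D0d uE]] mY X mX L1D L1C iX W [_ iW preW ceW].
pose G := [set A | exists i B, measurable B /\ A = Y i @^-1` B].
have hG : forall A, <<s G >> A -> measurable A.
  apply: smallest_sub; first exact: sigma_algebra_measurable.
  move=> _ [i [B [mB ->]]]; rewrite -[_ @^-1` _]setTI; exact: mY.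
have mW : measurable_fun setT (W : g_sigma_algebraType G -> R).
  by move=> _ B mB; rewrite setTI; exact: preW.
have mWT := mfun_sub hG mW.
have eqZ Z W' : determining_set P u Z -> cond_set P Y (determining_set P u) W' ->
    cond_exp P Y Z W' -> EQ P W' X = EQ P Z W.
  move=> [[mZ Z0 Z1] _] hW' [_ iW' preW' ceW'].
  have [[mW'0 W'0 W'1] _] := hW'.
  have mW' : measurable_fun setT (W' : g_sigma_algebraType G -> R).
    by move=> _ B mB; rewrite setTI; exact: preW'.
  apply: (KL hG) => //.
  exact: (L1s_fin L1C hW' mW'0 W'0 W'1 mX).
rewrite /factor_utility (uE W mWT).
apply/eqP; rewrite eq_le; apply/andP; split.
- apply: le_ereal_inf_tmp => _ [Z D0Z <-].
  have [mZ Z0 Z1] := D0d Z D0Z.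
  have iZ : P.-integrable setT (EFin \o Z).
    apply/integrableP; split; first exact/measurable_EFinP.
    under eq_integral do rewrite /= ger0_norm //.
    by rewrite Z1 ltry.
  have [W' [W'0 mW' ceW']] := exist_ce hG mZ Z0 iZ.
  have DZ : determining_set P u Z.
    split; first exact: D0d.
    by move=> X' mX'; rewrite uE //; apply: ereal_inf_lbound; exists Z.
  have mW'T := mfun_sub hG mW'.
  have W'1 : (\int[P]_x (W' x)%:E = 1)%E.
    by rewrite -Z1 -(ceW' setT) //; exact: (@measurableT _ (g_sigma_algebraType G)).
  have iW' : P.-integrable setT (EFin \o W').
    apply/integrableP; split; first exact/measurable_EFinP.
    under eq_integral do rewrite /= ger0_norm //.
    by rewrite W'1 ltry.
  have cW' : cond_exp P Y Z W'.
    split => //.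
    - by move=> B mB; have := mW' measurableT B mB; rewrite setTI.
  have inC : cond_set P Y (determining_set P u) W'.
    by split; [split | exists Z].
  apply: ge_ereal_inf; exists (EQ P W' X); first by exists W'.
  by rewrite (eqZ Z W' DZ inC cW').
- apply: le_ereal_inf_tmp => _ [W' hW' <-].
  have [_ [Z DZ cZ]] := hW'.
  rewrite (eqZ Z W' DZ hW' cZ) -(uE W mWT).
  by case: DZ => _ hu; exact: hu.
Qed.
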